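(* Let $\mathcal{C}$ be a linear $[n,k]$ code over a finite field $\mathbb{F}_q$ with all-symbol locality $r$, whose distinct recovery sets are $L_1,\dots,L_m$, and suppose $\mathcal{C}$ is a PMR code with respect to the admissible puncturing pattern $e=\{e_1,\dots,e_m\}$. After reordering coordinates so that $e_i=i$ for $i=1,\dots,m$, and writing $k_0=n-m$ and $\Delta=n-k-m$, the code $\mathcal{C}$ has a parity-check matrix of the form $$H=\begin{bmatrix} I_m & F\\ 0 & H_{\mathrm{MDS}}\end{bmatrix},$$ where $F$ is an $m\times k_0$ matrix, $H_{\mathrm{MDS}}$ is a $\Delta\times k_0$ matrix that is a parity-check matrix of a $[k_0,k_0-\Delta]$ MDS code, and the $i$-th row $\underline{x}_i^t$ of $F$ has Hamming weight at most $r$ for every $i=1,\dots,m$.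
   Context: An $[n,k]$ linear code $\mathcal{C}$ has all-symbol locality $r$ if for every coordinate $i\in[n]$ the dual code $\mathcal{C}^\perp$ contains a codeword whose support $L_i$ satisfies $i\in L_i$ and $|L_i|\le r+1$; $L_i$ is the recovery set of coordinate $i$, and it is assumed that $L_i\not\subset\bigcup_{j\ne i}L_j$. Such a code with minimum distance $d$ is said to be optimal if $d=(n-k+1)-(\lceil k/r\rceil-1)$. With distinct recovery sets $L_1,\dots,L_m$, a set $e=\{e_1,\dots,e_m\}$ is an admissible puncturing pattern if $e_i\in L_i\setminus\bigcup_{j\in[m],j\neq i}L_j$ for all $i$. A PMR (partially maximally recoverable) code is an optimal all-symbol locality code which becomes an MDS code upon puncturing the coordinates of some admissible puncturing pattern. *)

(* Defs.v *)
From HB Require Import structures.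
From mathcomp Require Import all_boot all_order all_algebra all_fingroup.
Set Implicit Arguments. Unset Strict Implicit. Unset Printing Implicit Defensive.
Import GRing.Theory.
Local Open Scope ring_scope.

(* A linear [n,k] code over a field F is represented by a full-row-rank
   generator matrix C : 'M_(k, n); its codewords are the row vectors c with
   (c <= C)%MS.  Dual codewords are the h with C *m h^T = 0. *)
Section Codes.
Variable F : fieldType.

Definition supp n (v : 'rV[F]_n) : {set 'I_n} := [set j | v 0 j != 0].
Definition wt n (v : 'rV[F]_n) : nat := #|supp v|.

Definition min_dist_is k n (C : 'M[F]_(k, n)) (d : nat) : Prop :=
  (exists c : 'rV[F]_n, (c <= C)%MS /\ c != 0 /\ wt c = d) /\
  (forall c : 'rV[F]_n, (c <= C)%MS -> c != 0 -> (d <= wt c)%N).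

Definition is_MDS k n (C : 'M[F]_(k, n)) : Prop :=
  min_dist_is C (n - \rank C + 1)%N.

Definition parity_check k n p (C : 'M[F]_(k, n)) (H : 'M[F]_(p, n)) : Prop :=
  C *m H^T = 0 /\ (\rank C + \rank H)%N = n.

Definition MDS_parity_check p N (H : 'M[F]_(p, N)) (K : nat) : Prop :=
  exists D : 'M[F]_(K, N), row_free D /\ parity_check D H /\ is_MDS D.

Definition all_symbol_locality k n m (C : 'M[F]_(k, n)) (r : nat)
    (L : 'I_m -> {set 'I_n}) : Prop :=
  [/\ injective L,
      (forall j, exists h : 'rV[F]_n, C *m h^T = 0 /\ supp h = L j),
      (forall j, (#|L j| <= r.+1)%N),
      (forall i : 'I_n, exists j, i \in L j) &
      (forall j, ~~ (L j \subset \bigcup_(j' | j' != j) L j'))].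

Definition optimal_LRC k n (C : 'M[F]_(k, n)) (r : nat) : Prop :=
  exists d : nat, min_dist_is C d /\
    d = ((n - k + 1) - ((k + r.-1) %/ r).-1)%N.

Definition admissible n m (L : 'I_m -> {set 'I_n}) (e : 'I_m -> 'I_n) : Prop :=
  forall i, e i \in L i :\: \bigcup_(j | j != i) L j.

(* delete the coordinates in E (remaining coordinates kept in increasing order) *)
Definition puncture k n (C : 'M[F]_(k, n)) (E : {set 'I_n}) : 'M[F]_(k, #|~: E|) :=
  \matrix_(i, j) C i (@enum_val _ (mem (~: E)) j).

Definition PMR_wrt k n m (C : 'M[F]_(k, n)) (r : nat)
    (L : 'I_m -> {set 'I_n}) (e : 'I_m -> 'I_n) : Prop :=
  [/\ all_symbol_locality C r L, optimal_LRC C r, admissible L e &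
      is_MDS (puncture C [set e i | i in 'I_m])].

End Codes.

(* Main.v *)
Require Import Defs.
From HB Require Import structures.
From mathcomp Require Import all_boot all_order all_algebra all_fingroup.
From mathcomp Require Import zify.
Import GRing.Theory.
Local Open Scope ring_scope.
Lemma ker_exists (F : fieldType) k N p (A : 'M[F]_(k, N)) :
  (\rank A + p)%N = N -> exists H : 'M[F]_(p, N), A *m H^T = 0 /\ \rank H = p.
Proof.
move=> hp.
have hK : p = \rank (kermx A^T) by rewrite mxrank_ker mxrank_tr -[in LHS](addKn (\rank A) p) hp.
subst p.
exists (row_base (kermx A^T)); split; last by rewrite (eq_row_base _).
apply: trmx_inj; rewrite trmx_mul trmxK trmx0; apply/sub_kermxP.
by rewrite (eq_row_base _).
Qed.

Lemma wt_perm (F : fieldType) N1 N2 (phi : 'I_N2 -> 'I_N1) (v : 'rV[F]_N1) (w : 'rV[F]_N2) :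
  bijective phi -> (forall b, w 0 b = v 0 (phi b)) -> wt w = wt v.
Proof.
move=> [psi h1 h2] hw; rewrite /wt.
have -> : supp v = phi @: supp w.
  apply/setP => j; apply/idP/imsetP.
  - rewrite inE => hj; exists (psi j); last by rewrite h2.
    by rewrite inE hw h2.
  - by move=> [b]; rewrite !inE hw => ? ->.
by rewrite card_imset //; apply: can_inj h1.
Qed.

Lemma MDS_transfer (F : fieldType) k N1 N2 (A : 'M[F]_(k, N1)) (B : 'M[F]_(k, N2))
  (phi : 'I_N2 -> 'I_N1) : bijective phi -> (forall a b, B a b = A a (phi b)) ->
  is_MDS A -> is_MDS B.
Proof.
move=> bij hB.
have eN : N2 = N1 by have := bij_eq_card bij; rewrite !card_ord.
case: bij => psi h1 h2.
pose Q : 'M[F]_(N1, N2) := \matrix_(j, b) (phi b == j)%:R.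
pose Q' : 'M[F]_(N2, N1) := \matrix_(b, j) (psi j == b)%:R.
have hQ : forall kk (v : 'M[F]_(kk, N1)) i b, (v *m Q) i b = v i (phi b).
  move=> kk v i b; rewrite mxE (bigD1 (phi b)) //= mxE eqxx mulr1 big1 ?addr0 //.
  by move=> j /negbTE hj; rewrite mxE eq_sym hj mulr0.
have hQ' : forall kk (v : 'M[F]_(kk, N2)) i b, (v *m Q') i b = v i (psi b).
  move=> kk v i b; rewrite mxE (bigD1 (psi b)) //= mxE eqxx mulr1 big1 ?addr0 //.
  by move=> j /negbTE hj; rewrite mxE eq_sym hj mulr0.
have eB : B = A *m Q by apply/matrixP => a b; rewrite hQ hB.
have eA : A = B *m Q' by apply/matrixP => a b; rewrite hQ' hB h2.
have rk : \rank B = \rank A.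
  apply/eqP; rewrite eqn_leq; apply/andP; split.
    by rewrite [X in (\rank X <= _)%N]eB mxrankM_maxl.
  by rewrite [X in (\rank X <= _)%N]eA mxrankM_maxl.
have hd : (N2 - \rank A + 1 = N1 - \rank A + 1)%N by rewrite eN.
rewrite /is_MDS rk hd; case => [[c [hc [hc0 hwc]]] hmin]; split.
  exists (c *m Q); split; first by rewrite eB submxMr.
  split.
    apply: contra hc0 => /eqP h0; apply/eqP/matrixP => i j.
    by have := congr1 (fun M => (M *m Q') i j) h0; rewrite hQ' hQ h2 mul0mx !mxE.
  rewrite -hwc; apply: (@wt_perm F _ _ phi); first by exists psi.
  by move=> b; rewrite hQ.
move=> c1 hc1 hc10.
have -> : wt c1 = wt (c1 *m Q').
  symmetry; apply: (@wt_perm F _ _ psi); first by exists phi.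
  by move=> b; rewrite hQ'.
apply: hmin; first by rewrite eA submxMr.
apply: contra hc10 => /eqP h0; apply/eqP/matrixP => i j.
by have := congr1 (fun M => (M *m Q) i j) h0; rewrite hQ hQ' h1 mul0mx !mxE.
Qed.
Lemma MDS_pc_cast (F : fieldType) k N K p (H : 'M[F]_(p, N)) (D : 'M[F]_(k, N)) :
  K = k -> row_free D -> D *m H^T = 0 -> (\rank D + \rank H)%N = N -> is_MDS D ->
  MDS_parity_check H K.
Proof. by move=> -> *; exists D. Qed.

Theorem theorem1 (Fq : finFieldType) (m k0 k r : nat)
  (C : 'M[Fq]_(k, m + k0)) (L : 'I_m -> {set 'I_(m + k0)})
  (e : 'I_m -> 'I_(m + k0)) :
  row_free C -> (0 < r)%N ->
  PMR_wrt C r L e ->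
  forall s : 'S_(m + k0), (forall i : 'I_m, s (lshift k0 i) = e i) ->
  exists (Fm : 'M[Fq]_(m, k0)) (HMDS : 'M[Fq]_(m + k0 - k - m, k0)),
    [/\ parity_check (col_perm s C) (block_mx 1%:M Fm 0 HMDS),
        (forall i : 'I_m, (wt (row i Fm) <= r)%N) &
        MDS_parity_check HMDS (k0 - (m + k0 - k - m))].
Proof.
move=> rfC _ [[Linj hdual hcard hcover hpriv] _ hadm hmds] s hs.
have [h hh] := fin_all_exists hdual.
have he : forall i j, (e i \in L j) = (i == j).
  move=> i j; have := hadm i; rewrite inE => /andP [hn hi].
  case: eqP => [<- //| /eqP nij]; apply: negbTE; apply: contra hn => hj.
  by apply/bigcupP; exists j => //; rewrite eq_sym.
have hsupp : forall j x, (h j 0 x != 0) = (x \in L j).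
  by move=> j x; case: (hh j) => _ <-; rewrite inE.
pose G0 : 'M[Fq]_(m, m + k0) := \matrix_(j, b) ((h j 0 (e j))^-1 * h j 0 b).
pose G := col_perm s G0.
pose C' := col_perm s C.
have hG : forall i j, G i (lshift k0 j) = (i == j)%:R.
  move=> i j; rewrite !mxE hs; case: eqP => [->|/eqP nij].
    by rewrite mulVf // hsupp he.
  have : h i 0 (e j) == 0 by rewrite -[_ == 0]negbK hsupp he eq_sym (negbTE nij).
  by move/eqP ->; rewrite mulr0.
have hCG0 : C *m G0^T = 0.
  apply/matrixP => a j; rewrite [RHS]mxE mxE.
  rewrite (eq_bigr (fun b => (h j 0 (e j))^-1 * (C a b * (h j)^T b 0))); last first.
    by move=> b _; rewrite !mxE mulrCA.
  rewrite -mulr_sumr; case: (hh j) => hz0 _.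
  have := congr1 (fun M : 'M_(k, 1) => M a 0) hz0; rewrite !mxE => ->.
  by rewrite mulr0.
have hCG : C' *m G^T = 0.
  rewrite /C' /G !col_permE trmx_mul tr_perm_mx mulmxA -(mulmxA C) -perm_mxM mulgV perm_mx1.
  by rewrite mulmx1.
pose Fm := rsubmx G.
have eG : G = row_mx 1%:M Fm.
  rewrite -[G](hsubmxK G); congr row_mx; apply/matrixP => i j.
  by rewrite [LHS]mxE hG [RHS]mxE.
pose Cl := lsubmx C'; pose Cr := rsubmx C'.
have eC : C' = row_mx Cl Cr by rewrite hsubmxK.
have hrel : Cl + Cr *m Fm^T = 0.
  by move: hCG; rewrite eC eG tr_row_mx mul_row_col trmx1 mulmx1.
have rC' : \rank C' = k.
  rewrite /C' col_permE mxrankMfree; first exact/eqP.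
  by rewrite row_free_unit unitmx_perm.
have eC2 : C' = Cr *m row_mx (- Fm^T) 1%:M.
  rewrite mul_mx_row mulmxN mulmx1 eC; congr row_mx.
  by apply/eqP; rewrite -addr_eq0 hrel.
have rCr : \rank Cr = k.
  apply/eqP; rewrite eqn_leq rank_leq_row /=.
  by rewrite -{1}rC' eC2 mxrankM_maxl.
have kk0 : (k <= k0)%N by rewrite -rCr rank_leq_col.
have hD : (\rank Cr + (m + k0 - k - m))%N = k0 by rewrite rCr; lia.
have [HM [hCH rH]] := @ker_exists Fq _ _ _ Cr hD.
exists Fm, HM; split.
- split.
    rewrite -/C' eC tr_block_mx mul_row_block trmx1 mulmx1 hrel trmx0 mulmx0 add0r hCH.
    by rewrite row_mx0.
  have eH : block_mx 1%:M Fm 0 HM *m block_mx 1%:M (- Fm) 0 1%:M = block_mx 1%:M 0 0 HM.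
    rewrite mulmx_block !mulmx1 !mul1mx !mulmx0 !mul0mx !addr0 ?add0r.
    by rewrite addNr.
  have uB : row_free (block_mx (1%:M : 'M[Fq]_m) (- Fm) 0 (1%:M : 'M_k0)).
    by rewrite row_free_unit unitmxE det_ublock !det1 mulr1 unitr1.
  rewrite -(mxrankMfree (block_mx 1%:M Fm 0 HM) uB) eH rank_diag_block_mx mxrank1 rH -/C' rC'.
  have hh2 : (k + (m + (m + k0 - k - m)) = m + k0)%N by lia.
  exact: hh2.
- move=> i; rewrite /wt.
  pose f := fun b : 'I_k0 => s (rshift m b).
  have finj : injective f by move=> b1 b2 /perm_inj /rshift_inj.
  rewrite -(card_imset _ finj).
  have hsub : f @: supp (row i Fm) \subset L i :\ e i.
    apply/subsetP => x /imsetP [b]; rewrite inE => hb ->.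
    rewrite !inE -hs (inj_eq perm_inj) eq_sym eq_lrshift /= -hsupp.
    move: hb; rewrite !mxE; apply: contra => /eqP ->; by rewrite mulr0.
  apply: (leq_trans (subset_leq_card hsub)).
  have := hcard i; rewrite (cardsD1 (e i)) he eqxx /=.
  by [].
- apply: (@MDS_pc_cast Fq k k0 _ _ HM Cr); first lia.
  + by rewrite /row_free rCr.
  + exact: hCH.
  + by rewrite rCr rH; lia.
  set E := [set e i | i in 'I_m].
  have einj : injective e.
    move=> i j hij; apply/eqP; by rewrite -he hij he.
  have hin : forall b, s (rshift m b) \in ~: E.
    move=> b; rewrite inE; apply/imsetP => [[i _]]; rewrite -hs => /perm_inj /eqP.
    by rewrite eq_sym eq_lrshift.
  pose phi := fun b => enum_rank_in (hin b) (s (rshift m b)).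
  have hphi : forall b, enum_val (phi b) = s (rshift m b).
    by move=> b; rewrite /phi enum_rankK_in.
  have pinj : injective phi.
    by move=> b1 b2 /(congr1 enum_val); rewrite !hphi => /perm_inj /rshift_inj.
  have cE : #|E| = m.
    rewrite card_imset //.
    exact: card_ord.
  have cEC : #|~: E| = k0.
    by have := cardsC E; rewrite cE card_ord => /eqP; rewrite eqn_add2l => /eqP.
  have pbij : bijective phi.
    apply: inj_card_bij => //; apply: eq_leq; rewrite !cardT !size_enum_ord; exact: cEC.
  apply: (@MDS_transfer Fq k _ k0 (puncture C E) Cr phi pbij) => // a b.
  by rewrite !mxE hphi.
Qed.
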